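(* Fix integers $k\geq 2$, $a\in\mathbb{Z}$, $0\le s\le r$ with $r\ge 1$, and positive integers $A_1,\dots,A_r$. Let $P(y)=(y-a)^e\prod_{j=1}^t P_j(y)^{e_j}\in\mathbb{Z}[y]$ with $e\geq 1$, $e_j\ge 1$, where $P_1,\dots,P_t\in\mathbb{Z}[y]$ are distinct irreducible polynomials. Then the equation $$P(y)=\prod_{i=1}^s A_i^{n_i}n_i!\cdot\prod_{i=s+1}^r A_i^{n_i}n_i!!$$ has only finitely many solutions $(n_1,\dots,n_r,y)$ with $n_1,\dots,n_r$ positive integers and $y=x+a$ for some $x\in\mathcal{F}_k$.
   Context: For a positive integer $x=\prod_{i\in I}p_i^{\alpha_i}$ (prime factorization), $K(x)=\max_{i\in I}\alpha_i$ (with $K(1)=0$) and $\omega(x)=|I|$ is the number of distinct prime factors. $\mathcal{F}_k=\{x\in\mathbb{N}: K(x)<k\}$ (positive integers all of whose prime exponents are $<k$). $n!!$ is the double factorial. *)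

(* Defs.v *)
From mathcomp Require Import all_boot all_order all_algebra.
Set Implicit Arguments. Unset Strict Implicit. Unset Printing Implicit Defensive.
Import GRing.Theory Num.Theory.

Fixpoint dfact (n : nat) : nat :=
  match n with
  | 0 => 1
  | 1 => 1
  | (m.+2) as n' => n' * dfact m
  end.

Definition Kexp (x : nat) : nat := \max_(p <- primes x) logn p x.

Definition inFk (k x : nat) : bool := (0 < x) && (Kexp x < k).

(* Main.v *)
Require Import Defs.
From mathcomp Require Import all_boot all_order all_algebra.
From mathcomp Require Import zify.
Import Order.TTheory GRing.Theory Num.Theory.


Lemma binmid_le m : 'C(m.*2.+1, m) <= 4 ^ m.
Proof.
have H : 2 ^ m.*2.+1 = \sum_(0 <= i < m.*2.+2) 'C(m.*2.+1, i) * (1 ^ (m.*2.+1 - i) * 1 ^ i).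
  by rewrite big_mkord -Pascal.
have Hm : m <= m.*2.+1.+1 by lia.
rewrite (@big_cat_nat _ _ _ m.+2) /= in H; try lia.
rewrite (@big_cat_nat _ _ _ m 0 m.+2) /= in H; try lia.
rewrite big_nat_recr /= in H; last by lia.
rewrite big_nat1 in H.
rewrite !exp1n !muln1 in H.
have Hs : 'C(m.*2.+1, m.+1) = 'C(m.*2.+1, m).
  have -> : m.+1 = m.*2.+1 - m by lia.
  by rewrite bin_sub //; lia.
rewrite Hs in H.
have : 2 * 'C(m.*2.+1, m) <= 2 ^ m.*2.+1 by rewrite H; lia.
rewrite expnS -mul2n expnM /=.
by rewrite leq_pmul2l.
Qed.

Lemma prime_dvd_fact p n : prime p -> p %| n`! -> p <= n.
Proof.
move=> pp; elim: n => [|n IH]; first by rewrite Euclid_dvd1.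
rewrite factS Euclid_dvdM // => /orP [H|H].
  by apply: dvdn_leq.
by apply: leqW; apply: IH.
Qed.

Definition prodp i j := \prod_(i <= p < j | prime p) p.

Lemma prodp_gt0 i j : 0 < prodp i j.
Proof. by rewrite /prodp; apply: prodn_cond_gt0 => p /prime_gt0. Qed.

Lemma prodp_dvd m j : j <= m.*2.+2 -> prodp m.+2 j %| 'C(m.*2.+1, m).
Proof.
elim: j => [|j IH] Hj; first by rewrite /prodp big_geq.
case: (leqP j m.+1) => Hjm.
  by rewrite /prodp big_geq.
rewrite /prodp big_mkcond big_nat_recr /=; last by lia.
rewrite -big_mkcond -/(prodp m.+2 j).
case: ifP => pj; last by rewrite muln1; apply: IH; lia.
rewrite Gauss_dvd; last first.
  rewrite coprime_sym prime_coprime //.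
  rewrite /prodp Euclid_dvd_prod // big_nat_cond.
  elim/big_rec: _ => [|i b /andP [/andP [Hi1 Hi2] pi] Hb]; first by [].
  apply/negP => /orP [|H]; last by rewrite H in Hb.
  rewrite dvdn_prime2 // => /eqP E; lia.
rewrite IH; last by lia.
have : j %| 'C(m.*2.+1, m) * (m`! * (m.*2.+1 - m)`!).
  rewrite bin_fact; last by lia.
  apply: dvdn_fact; lia.
rewrite Euclid_dvdM // => /orP [->//|].
rewrite Euclid_dvdM // => /orP [] /(prime_dvd_fact _ _ pj) H; lia.
Qed.

Lemma primorial_le n : prodp 0 n.+1 <= 4 ^ n.
Proof.
elim/ltn_ind: n => n IH.
case: n IH => [|n] IH; first by rewrite /prodp unlock.
case: n IH => [|n] IH; first by rewrite /prodp unlock.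
have Hd := odd_double_half n.
case: (boolP (odd n)) => on.
  set m := n./2.+1.
  have Em : n.+2 = m.*2.+1 by rewrite /m; move: Hd; rewrite on /=; lia.
  rewrite Em /prodp (@big_cat_nat _ _ _ m.+2) //=; try lia.
  rewrite -/(prodp 0 m.+2) -/(prodp m.+2 m.*2.+2).
  have H1 : prodp 0 m.+2 <= 4 ^ m.+1 by apply: IH; lia.
  have H2 : prodp m.+2 m.*2.+2 <= 4 ^ m.
    apply: leq_trans (binmid_le m).
    apply: dvdn_leq; last by apply: prodp_dvd.
    by rewrite bin_gt0; lia.
  apply: leq_trans (leq_mul H1 H2) _.
  by rewrite -expnD; apply: leq_pexp2l => //; lia.
case: n IH Hd on => [|n] IH Hd on.
  by rewrite /prodp unlock.
rewrite /prodp big_mkcond big_nat_recr //= -big_mkcond.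
have -> : prime n.+3 = false.
  apply/negP => pr.
  have := even_prime pr; case=> [//|].
  by rewrite /= negbK; move: on => /= /negbTE ->.
rewrite muln1; apply: leq_trans (IH n.+2 (ltnSn _)) _.
by rewrite leq_exp2l.
Qed.


Lemma dfact_gt0 n : 0 < dfact n.
Proof. elim/ltn_ind: n => [[|[|n]]] // IH; rewrite /= muln_gt0 IH //. Qed.

Lemma dfact_dvd n : dfact n %| n`!.
Proof.
elim/ltn_ind: n => [[|[|n]]] // IH.
rewrite [dfact _]/= !factS.
by apply: dvdn_mul => //; apply: dvdn_mull; apply: IH.
Qed.

Lemma dfactSS n : dfact n.+2 = n.+2 * dfact n.
Proof. by []. Qed.

Lemma dfact_ge n : n <= dfact n.
Proof.
case: n => [|[|n]] //=.
by rewrite -{1}[n.+2]muln1 leq_mul2l dfact_gt0 orbT.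
Qed.

Lemma dfact_grow K g : exists N0, forall N, N0 <= N -> K * g ^ N < dfact N.
Proof.
set h := g.+1.
set M := (2 * h) ^ 2.
have hpos : 0 < h by [].
have claim : forall j, (2 * h) ^ j <= dfact (M + j) * h ^ M.+1.
  elim/ltn_ind => [[|[|j]]] IH.
  - by rewrite expn0 muln_gt0 dfact_gt0 expn_gt0 hpos.
  - have HM : 2 * h <= M by rewrite /M expnS expn1; nia.
    rewrite expn1; apply: (@leq_trans (dfact (M + 1))).
      apply: leq_trans (dfact_ge _); lia.
    by rewrite leq_pmulr // expn_gt0 hpos.
  - have -> : M + j.+2 = (M + j).+2 by lia.
    rewrite dfactSS.
    have -> : (2 * h) ^ j.+2 = M * (2 * h) ^ j by rewrite /M -expnD add2n.
    rewrite -mulnA; apply: leq_mul; first by lia.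
    by apply: IH.
exists (M + K * h ^ (M + M.+1)) => N HN.
have -> : N = M + (N - M) by lia.
set j := N - M.
have Hj : K * h ^ (M + M.+1) <= j by rewrite /j; lia.
have Hgh : g ^ (M + j) <= h ^ (M + j) by rewrite leq_exp2r.
apply: (@leq_ltn_trans (K * h ^ (M + j))); first by rewrite leq_mul2l Hgh orbT.
rewrite -(ltn_pmul2r (_ : 0 < h ^ M.+1)); last by rewrite expn_gt0.
apply: leq_trans (claim j).
have E : K * h ^ (M + j) * h ^ M.+1 = K * h ^ (M + M.+1) * h ^ j.
  by rewrite -!mulnA -!expnD; congr (_ * _ ^ _); lia.
rewrite E expnMn.
have : j < 2 ^ j by apply: ltn_expl.
have : 0 < h ^ j by rewrite expn_gt0.
nia.
Qed.

Lemma leq_expn_base m n e : m <= n -> m ^ e <= n ^ e.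
Proof. by case: e => [//|e] H; rewrite leq_exp2r. Qed.

Lemma prod_ge_term (I : finType) (P : pred I) (F : I -> nat) i :
  P i -> (forall j, P j -> 0 < F j) -> F i <= \prod_(j | P j) F j.
Proof.
move=> Pi Hp; rewrite (bigD1 i) //=; apply: leq_pmulr.
by apply: prodn_cond_gt0 => j /andP [Pj _]; exact: Hp.
Qed.

Lemma prod_expn (r : seq nat) (P : pred nat) (F : nat -> nat) k :
  \prod_(i <- r | P i) F i ^ k = (\prod_(i <- r | P i) F i) ^ k.
Proof.
elim/big_rec2: _ => [|i y1 y2 _ ->]; first by rewrite exp1n.
by rewrite expnMn.
Qed.

Lemma x_bound x Z k : 0 < x -> Kexp x < k ->
  (forall p, prime p -> p %| x -> p <= Z) -> x <= 4 ^ (Z * k).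
Proof.
move=> x0 Kx Hb.
pose G p := if prime p && (p <= Z) then p ^ k else 1.
rewrite -{1}(partnT x0) (widen_partn _ (leq_maxl x Z)).
apply: (@leq_trans (\prod_(0 <= p < (maxn x Z).+1 | p \in predT) G p)).
  apply: leq_prod => p _.
  case: (posnP (logn p x)) => [->|lpos].
    rewrite expn0 /G; case: ifP => // /andP [pp _].
    by rewrite expn_gt0 prime_gt0.
  move: (lpos); rewrite logn_gt0 mem_primes => /and3P [pp _ pdx].
  rewrite /G pp (Hb p pp pdx) /=.
  apply: leq_pexp2l; first by apply: prime_gt0.
  apply: ltnW; apply: leq_ltn_trans Kx.
  rewrite /Kexp; apply: (@leq_bigmax_seq _ _ xpredT (fun q => logn q x)) => //.
  by rewrite -logn_gt0.
rewrite (@big_cat_nat _ _ _ Z.+1) //=; last by rewrite ltnS leq_maxr.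
rewrite [X in _ * X <= _]big1_seq ?muln1; last first.
  move=> p /andP [_]; rewrite mem_index_iota => /andP [Hp _].
  by rewrite /G; case: ifP => // /andP [_ H]; move: Hp; rewrite ltnNge H.
apply: (@leq_trans ((prodp 0 Z.+1) ^ k)).
  rewrite /prodp -prod_expn big_mkcond [X in _ <= X]big_mkcond /=.
  apply: leq_prod => p _; rewrite /G; case pp: (prime p) => //=.
  by case: (p <= Z) => //; rewrite expn_gt0 prime_gt0.
rewrite expnM; apply: leq_expn_base.
by apply: primorial_le.
Qed.

Section HB.
Local Open Scope ring_scope.
Lemma horner_bound_int (p : {poly int}) (z : int) :
  `|p.[z]| <= (\sum_(i < size p) `|p`_i|) * (`|z| + 1) ^+ size p.
Proof.
rewrite horner_coef mulr_suml.
apply: le_trans (ler_norm_sum _ _ _) _.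
apply: ler_sum => i _.
rewrite normrM normrX ler_wpM2l //.
apply: le_trans (_ : (`|z| + 1) ^+ i <= _).
  by apply: lerXn2r; rewrite ?nnegrE ?addr_ge0 // lerDl.
apply: ler_weXn2l; first by rewrite lerDr.
by apply: ltnW.
Qed.

Lemma horner_bound (p : {poly int}) (z : int) :
  (absz p.[z] <= (\sum_(i < size p) absz (p`_i)%R) * (absz z).+1 ^ size p)%N.
Proof.
rewrite -lez_nat -!natz natrM natrX natr_sum -addn1 natrD !natz abszE.
apply: le_trans (horner_bound_int p z) _.
apply: ler_wpM2r; first by apply: exprn_ge0; rewrite addr_ge0.
by apply: ler_sum => i _; rewrite natz abszE.
Qed.

End HB.

Local Open Scope ring_scope.

Theorem theorem4 (k : nat) (a : int) (r s : nat) (A : 'I_r -> nat)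
    (e t : nat) (Pj : 'I_t -> {poly int}) (ej : 'I_t -> nat) :
  (2 <= k)%N -> (1 <= r)%N -> (s <= r)%N ->
  (forall i, (0 < A i)%N) ->
  (1 <= e)%N ->
  (forall j, (1 <= ej j)%N) ->
  injective Pj ->
  (forall j, irreducible_poly (Pj j)) ->
  let P : {poly int} := ('X - a%:P) ^+ e * \prod_(j < t) Pj j ^+ ej j in
  exists L : seq ({ffun 'I_r -> nat} * int),
    forall (n : {ffun 'I_r -> nat}) (y : int),
      (forall i, (0 < n i)%N) ->
      (exists x : nat, inFk k x /\ y = x%:Z + a) ->
      P.[y] = ((\prod_(i < r | (i < s)%N) (A i ^ n i * (n i)`!)
                * \prod_(i < r | (s <= i)%N) (A i ^ n i * dfact (n i)))%N)%:Z ->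
      (n, y) \in L.
Proof.
move=> k2 r1 sr Apos e1 ej1 Pinj Pirr P.
set D := size P.
set S := (\sum_(i < D) absz (P`_i)%R)%N.
set Am := (\max_(i < r) A i)%N.
set al := absz a.
set g := (4 ^ (k * D))%N.
set K := (S * (al.+2) ^ D * g ^ Am)%N.
have [N0 HN0] := dfact_grow K g.
set X0 := (4 ^ ((Am + N0) * k))%N.
pose FF := [seq ([ffun i => nat_of_ord (f i)] : {ffun 'I_r -> nat}) | f : {ffun 'I_r -> 'I_N0} <- enum {ffun 'I_r -> 'I_N0}].
pose YY := [seq (j%:Z + a) | j <- iota 0%N X0.+1].
exists [seq (f, yy) | f <- FF, yy <- YY].
move=> n y npos [x [/andP [x0 Kx] ->]].
set R := (_ * _)%N.
move=> Heq.
have Rpos : (0 < R)%N.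
  rewrite /R muln_gt0; apply/andP; split; apply: prodn_cond_gt0 => i _;
    rewrite muln_gt0 expn_gt0 Apos ?fact_gt0 ?dfact_gt0 //.
have xdR : (x %| R)%N.
  have : (x%:Z %| R%:Z)%Z.
    rewrite -Heq /P hornerM horner_exp hornerXsubC addrK.
    by apply: dvdz_mulr; apply: dvdz_exp => //; apply: dvdzz.
  by rewrite dvdzE.
set N := (\max_(i < r) n i)%N.
set Z := (Am + N)%N.
have pbound : forall p, prime p -> (p %| x)%N -> (p <= Z)%N.
  move=> p pp pdx.
  have := dvdn_trans pdx xdR.
  rewrite /R Euclid_dvdM // => /orP []; rewrite Euclid_dvd_prod //.
  - elim/big_ind: _ => //; first by move=> b1 b2 H1 H2 /orP [/H1|/H2].
    move=> i _; rewrite Euclid_dvdM // Euclid_dvdX // => /orP [/andP [pA _]|pf].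
      apply: leq_trans (dvdn_leq (Apos i) pA) _.
      by apply: leq_trans (leq_bigmax i) _; apply: leq_addr.
    apply: leq_trans (prime_dvd_fact _ _ pp pf) _.
    by apply: leq_trans (leq_bigmax i) _; apply: leq_addl.
  - elim/big_ind: _ => //; first by move=> b1 b2 H1 H2 /orP [/H1|/H2].
    move=> i _; rewrite Euclid_dvdM // Euclid_dvdX // => /orP [/andP [pA _]|pf].
      apply: leq_trans (dvdn_leq (Apos i) pA) _.
      by apply: leq_trans (leq_bigmax i) _; apply: leq_addr.
    have pf' := dvdn_trans pf (dfact_dvd _).
    apply: leq_trans (prime_dvd_fact _ _ pp pf') _.
    by apply: leq_trans (leq_bigmax i) _; apply: leq_addl.
have xle : (x <= 4 ^ (Z * k))%N by apply: x_bound.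
have Rle : (R <= S * (al.+2) ^ D * g ^ Am * g ^ N)%N.
  have -> : R = absz P.[x%:Z + a] by rewrite Heq.
  apply: leq_trans (horner_bound P _) _.
  have H1 : ((absz (x%:Z + a)%R).+1 <= al.+2 * 4 ^ (Z * k))%N.
    have H2 : (absz (x%:Z + a)%R <= x + al)%N by rewrite /al; lia.
    apply: (@leq_trans (al.+2 * x)); first by nia.
    by rewrite leq_mul2l xle orbT.
  rewrite -!mulnA leq_mul2l; apply/orP; right.
  have E : (g ^ Am * g ^ N = (4 ^ (Z * k)) ^ D)%N.
    by rewrite /g -!expnM -expnD; congr (expn _ _); rewrite /Z; nia.
  rewrite E -expnMn; exact: leq_expn_base.
have dN : (dfact N <= R)%N.
  have cardr : (0 < #|'I_r|)%N by rewrite card_ord.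
  have [i0 Ei0] := @bigop.eq_bigmax _ (fun i : 'I_r => n i) cardr.
  rewrite /N Ei0 /R.
  case: (ltnP i0 s) => Hi0.
    apply: leq_trans (leq_pmulr _ (prodn_cond_gt0 _)); last first.
      by move=> i _; rewrite muln_gt0 expn_gt0 Apos dfact_gt0.
    apply: leq_trans (@prod_ge_term _ (fun i : 'I_r => (i < s)%N) (fun i => A i ^ n i * (n i)`!)%N i0 Hi0 _); last first.
      by move=> i _; rewrite muln_gt0 expn_gt0 Apos fact_gt0.
    apply: leq_trans (dvdn_leq (fact_gt0 _) (dfact_dvd _)) _.
    by apply: leq_pmull; rewrite expn_gt0 Apos.
  apply: leq_trans (leq_pmull _ (prodn_cond_gt0 _)); last first.
    by move=> i _; rewrite muln_gt0 expn_gt0 Apos fact_gt0.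
  apply: leq_trans (@prod_ge_term _ (fun i : 'I_r => (s <= i)%N) (fun i => A i ^ n i * dfact (n i))%N i0 Hi0 _); last first.
    by move=> i _; rewrite muln_gt0 expn_gt0 Apos dfact_gt0.
  by apply: leq_pmull; rewrite expn_gt0 Apos.
have NN0 : (N < N0)%N.
  rewrite ltnNge; apply/negP => H.
  have := HN0 N H; rewrite /K.
  have := leq_trans dN Rle.
  lia.
have xX0 : (x <= X0)%N.
  apply: leq_trans xle _; apply: leq_pexp2l => //.
  by rewrite leq_mul2r; apply/orP; right; rewrite /Z leq_add2l ltnW.
apply: allpairs_f.
  have Hn : forall i, (n i < N0)%N := fun i => leq_ltn_trans (leq_bigmax i) NN0.
  apply/mapP; exists [ffun i => Ordinal (Hn i)]; first by rewrite mem_enum.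
  by apply/ffunP => i; rewrite !ffunE.
apply/mapP; exists x => //; rewrite mem_iota; lia.
Qed.
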